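(* Let $n\geq1$, $k\in\{1,\ldots,n\}$, $l\in\{1,\ldots,n\}$, and let $v=v_{l,\eta_k}+q(1,1)\in\mathbb N^2$ with $q\in\mathbb N$, $q\geq n-l+1+r_{l,\eta_k}$. Then $f_k(v)\geq f_k(u)$ for all $u\in T_{0,\eta_k}\cup\bigcup_{j=1}^l(T_{j,\eta_k}+r_{j,\eta_k}(1,1))$.
   Context: $f_k(v)=kv_1+(1-k)v_2$. $\Omega$ is the set of $\eta=(z,d_0,\ldots,d_r)$ with $z\in\{0,1\}$, $d_0=0$, $d_i\geq1$ ($1\leq i\leq r$), $\sum d_i=n$. For $j\in\{1,\ldots,n\}$, $t$ unique with $\sum_{i<t}d_i<j\leq\sum_{i\leq t}d_i$, $c=j-\sum_{i<t}d_i$; $v_{j,\eta}=(\sum_{i\text{ odd},i<t}d_i+c,0)$ if $z=1,t$ odd; $(0,\sum_{i\text{ even},i<t}d_i+c)$ if $z=1,t$ even; $(0,\sum_{i\text{ odd},i<t}d_i+c)$ if $z=0,t$ odd; $(\sum_{i\text{ even},i<t}d_i+c,0)$ if $z=0,t$ even. $T_{j,\eta}=\{v_{j,\eta}+p(1,1):0\leq p\leq n-j\}$, $T_{0,\eta}=\{(p,p):1\leq p\leq n\}$, $r_{j,\eta}=n\pi_2(v_{j,\eta})$, $T_{j,\eta}+r_{j,\eta}(1,1)=\{w+(r_{j,\eta},r_{j,\eta}):w\in T_{j,\eta}\}$. $\eta_k$: $z_k=1$ if $k\leq n+1-k$, else $0$; $d_{k,0}=0$; for $l\geq1$, $O_l=\sum_{j\text{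 odd},j\leq l-1}d_{k,j}$, $E_l=\sum_{j\text{ even},j\leq l-1}d_{k,j}$; $t_l=\max\{m\in\mathbb N:mk\leq(E_l+1)(n+1-k)\}$ ($z_k=1$, $l$ odd), $\max\{m:m(n+1-k)\leq(O_l+1)k\}$ ($z_k=1$, $l$ even), $\max\{m:m(n+1-k)\leq(E_l+1)k\}$ ($z_k=0$, $l$ odd), $\max\{m:mk\leq(O_l+1)(n+1-k)\}$ ($z_k=0$, $l$ even); $s_1=0$, $s_l=O_l$ (odd $l>1$), $s_l=E_l$ (even $l$); $d_{k,l}=\min\{n-\sum_{j<l}d_{k,j},t_l-s_l\}$, stopping at first $r$ with $\sum_{j\leq r}d_{k,j}=n$; $\eta_k=(z_k,d_{k,0},\ldots,d_{k,r})\in\Omega$. *)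

(* Defs.v *)
From mathcomp Require Import all_boot all_order all_algebra.
Set Implicit Arguments. Unset Strict Implicit. Unset Printing Implicit Defensive.
Import GRing.Theory Num.Theory.

(* An element eta = (z, d_0, d_1, ..., d_r) of Omega is represented by the
   pair (z, ds) with z : bool (true <-> z = 1) and ds = [:: d_1; ...; d_r];
   the entry d_0 = 0 is implicit. *)

Definition eta_t := (bool * seq nat)%type.

Definition in_Omega (n : nat) (eta : eta_t) : Prop :=
  all (fun d => 0 < d) eta.2 /\ sumn eta.2 = n.

Definition fk (k : nat) (v : nat * nat) : int :=
  (k%:Z * (v.1)%:Z + (1 - k%:Z) * (v.2)%:Z)%R.

Definition dd (ds : seq nat) (i : nat) : nat := if i is i'.+1 then nth 0 ds i' else 0.

Definition osum (ds : seq nat) (t : nat) : nat := sumn [seq dd ds i | i <- iota 0 t & odd i].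
Definition esum (ds : seq nat) (t : nat) : nat := sumn [seq dd ds i | i <- iota 0 t & ~~ odd i].

Definition psum (ds : seq nat) (t : nat) : nat := sumn [seq dd ds i | i <- iota 0 t.+1].

(* the index t with sum_{i<t} d_i < j <= sum_{i<=t} d_i : the least t >= 1
   with j <= sum_{i<=t} d_i *)
Definition tidx (ds : seq nat) (j : nat) : nat :=
  (find (fun t => j <= psum ds t) (iota 1 (size ds))).+1.

Definition vv (j : nat) (eta : eta_t) : nat * nat :=
  let ds := eta.2 in
  let t := tidx ds j in
  let c := j - psum ds t.-1 in
  if eta.1 then
    (if odd t then (osum ds t + c, 0) else (0, esum ds t + c))
  else
    (if odd t then (0, osum ds t + c) else (esum ds t + c, 0)).

Definition rr (n j : nat) (eta : eta_t) : nat := n * (vv j eta).2.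

Definition vadd (v w : nat * nat) : nat * nat := (v.1 + w.1, v.2 + w.2).

Definition inT (n j : nat) (eta : eta_t) (u : nat * nat) : Prop :=
  exists p, p <= n - j /\ u = vadd (vv j eta) (p, p).

Definition inT0 (n : nat) (u : nat * nat) : Prop :=
  exists p, 1 <= p <= n /\ u = (p, p).

Definition inTshift (n j : nat) (eta : eta_t) (u : nat * nat) : Prop :=
  exists w, inT n j eta w /\ u = vadd w (rr n j eta, rr n j eta).

(* max { m in N : m * a <= b }  (used with a >= 1, so m <= b) *)
Definition maxm (a b : nat) : nat := foldr maxn 0 [seq m <- iota 0 b.+1 | m * a <= b].

(* Construction of eta_k.  acc = [:: d_{k,1}; ...; d_{k,l-1}]. *)
Definition next_d (n k : nat) (z : bool) (acc : seq nat) : nat :=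
  let l := (size acc).+1 in
  let O := osum acc l in
  let E := esum acc l in
  let t := if z then
             (if odd l then maxm k ((E + 1) * (n + 1 - k))
              else maxm (n + 1 - k) ((O + 1) * k))
           else
             (if odd l then maxm (n + 1 - k) ((E + 1) * k)
              else maxm k ((O + 1) * (n + 1 - k))) in
  let s := if l == 1 then 0 else if odd l then O else E in
  minn (n - sumn acc) (t - s).

(* iterate, stopping at the first r with sum_{j<=r} d_{k,j} = n
   (fuel n suffices since each d_{k,l} >= 1) *)
Fixpoint build (n k : nat) (z : bool) (fuel : nat) (acc : seq nat) : seq nat :=
  if fuel is fuel'.+1 then
    if sumn acc == n then acc
    else build n k z fuel' (rcons acc (next_d n k z acc))
  else acc.

Definition eta_k (n k : nat) : eta_t :=
  let z := k <= n + 1 - k in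
  (z, build n k z n [::]).

(* Main.v *)
Require Import Defs.
From mathcomp Require Import all_boot all_order all_algebra.
Import GRing.Theory Num.Theory.
From mathcomp Require Import zify.

Lemma iotaS0 t : iota 0 t.+1 = iota 0 t ++ [:: t].
Proof. by rewrite -addn1 iotaD. Qed.

Lemma osumS ds t : osum ds t.+1 = osum ds t + (if odd t then dd ds t else 0).
Proof.
rewrite /osum iotaS0 filter_cat map_cat sumn_cat /=.
by case: (odd t) => /=; rewrite ?addn0.
Qed.

Lemma esumS ds t : esum ds t.+1 = esum ds t + (if odd t then 0 else dd ds t).
Proof.
rewrite /esum iotaS0 filter_cat map_cat sumn_cat /=.
by case: (odd t) => /=; rewrite ?addn0.
Qed.

Lemma psumS ds t : psum ds t.+1 = psum ds t + dd ds t.+1.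
Proof. by rewrite /psum iotaS0 map_cat sumn_cat /= addn0. Qed.

Lemma psum0 ds : psum ds 0 = 0.
Proof. by []. Qed.

Lemma psum_mono ds a b : a <= b -> psum ds a <= psum ds b.
Proof.
move=> /subnK <-; elim: (b - a) => [|m IH]; first by rewrite add0n.
by rewrite addSn psumS (leq_trans IH) ?leq_addr.
Qed.

Lemma eq_osum a b t : (forall i, i < t -> dd a i = dd b i) -> osum a t = osum b t.
Proof.
move=> H; rewrite /osum; congr sumn; apply/eq_in_map => i.
by rewrite mem_filter mem_iota /= => /andP [_ Hi]; apply: H.
Qed.

Lemma eq_esum a b t : (forall i, i < t -> dd a i = dd b i) -> esum a t = esum b t.
Proof.
move=> H; rewrite /esum; congr sumn; apply/eq_in_map => i.
by rewrite mem_filter mem_iota /= => /andP [_ Hi]; apply: H.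
Qed.

Definition sp (ds : seq nat) (t : nat) : nat := if odd t then osum ds t else esum ds t.
Definition osp (ds : seq nat) (t : nat) : nat := if odd t then esum ds t else osum ds t.

Lemma spS ds t : sp ds t.+1 = osp ds t.
Proof. by rewrite /sp /osp osumS esumS /=; case: (odd t); rewrite /= addn0. Qed.

Lemma spSS ds t : sp ds t.+2 = sp ds t + dd ds t.
Proof. rewrite /sp /= negbK osumS esumS osumS esumS /=; case: (odd t) => /=; lia. Qed.

Lemma eq_sp a b t : (forall i, i < t -> dd a i = dd b i) -> sp a t = sp b t.
Proof. by move=> H; rewrite /sp (eq_osum _ _ _ H) (eq_esum _ _ _ H). Qed.
Lemma eq_osp a b t : (forall i, i < t -> dd a i = dd b i) -> osp a t = osp b t.
Proof. by move=> H; rewrite /osp (eq_osum _ _ _ H) (eq_esum _ _ _ H). Qed.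

Lemma dd_rcons acc x i : i <= size acc -> dd (rcons acc x) i = dd acc i.
Proof. case: i => //= i Hi; by rewrite nth_rcons Hi. Qed.

Lemma dd_rcons_last acc x : dd (rcons acc x) (size acc).+1 = x.
Proof. by rewrite /= nth_rcons ltnn eqxx. Qed.

Lemma dd_nil i : dd [::] i = 0.
Proof. by case: i => //= i; rewrite nth_nil. Qed.

Lemma osum_nil t : osum [::] t = 0.
Proof. rewrite /osum; elim: (iota 0 t) => //= a s; case: (odd a) => //= ->; by rewrite dd_nil. Qed.
Lemma esum_nil t : esum [::] t = 0.
Proof. rewrite /esum; elim: (iota 0 t) => //= a s; case: (odd a) => //= ->; by rewrite dd_nil. Qed.

Definition wt (n k : nat) (z : bool) (t : nat) : nat := if z == odd t then k else n + 1 - k.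

Lemma next_dE n k z acc : let l := (size acc).+1 in
  next_d n k z acc = minn (n - sumn acc)
     (maxm (wt n k z l) ((osp acc l + 1) * wt n k z l.+1) - sp acc l).
Proof.
rewrite /next_d /wt /osp /sp /=.
case: z; case Ho: (odd (size acc)) => /=.
all: case: (size acc) Ho => [|m] //= _.
all: by rewrite /osum.
Qed.


Lemma foldr_maxn_P (P : nat -> bool) s : P 0 -> all P s -> P (foldr maxn 0 s).
Proof.
move=> H0; elim: s => //= a s IH /andP [Ha /IH Hs].
by rewrite /maxn; case: ifP.
Qed.

Lemma foldr_maxn_ge s m : m \in s -> m <= foldr maxn 0 s.
Proof.
elim: s => //= a s IH; rewrite in_cons => /orP [/eqP -> | /IH H].
- by rewrite leq_maxl.
- by rewrite (leq_trans H) ?leq_maxr.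
Qed.

Lemma maxm_le a b : maxm a b * a <= b.
Proof.
rewrite /maxm; apply: (foldr_maxn_P (fun m => m * a <= b)) => //.
by apply/allP => m; rewrite mem_filter => /andP [].
Qed.

Lemma maxm_ge a b m : 0 < a -> m * a <= b -> m <= maxm a b.
Proof.
move=> Ha Hm; apply: foldr_maxn_ge; rewrite mem_filter Hm mem_iota /=.
rewrite add0n ltnS (leq_trans _ Hm) //; by rewrite leq_pmulr.
Qed.

Lemma wt_pos n k z t : 1 <= k <= n -> 0 < wt n k z t.
Proof. rewrite /wt; case: ifP => _; lia. Qed.

Lemma wtSS n k z t : wt n k z t.+2 = wt n k z t.
Proof. by rewrite /wt /= negbK. Qed.

Definition Inv n k z acc :=
  [/\ all (fun d => 0 < d) acc, sumn acc <= n,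
   (forall l, 0 < l <= size acc -> wt n k z l * (sp acc l + dd acc l) <= wt n k z l.+1 * (osp acc l + 1)),
   (sumn acc < n -> (sp acc (size acc).+1 + 1) * wt n k z (size acc).+1 <= (osp acc (size acc).+1 + 1) * wt n k z (size acc).+2)
  & ((k == 1) || (n + 1 - k == 1) -> 0 < size acc -> sumn acc = n /\ size acc = 1)].

Lemma sumn_rcons' s x : sumn (rcons s x) = sumn s + x.
Proof. by rewrite -cats1 sumn_cat /= addn0. Qed.

Lemma first_big n k z : 1 <= k <= n -> z = (k <= n + 1 - k) ->
  (k == 1) || (n + 1 - k == 1) -> n * wt n k z 1 <= 1 * wt n k z 2.
Proof.
move=> Hk Hz H1; rewrite /wt /=; case: z Hz => Hz /=.
+ have Hz' : k <= n + 1 - k by rewrite -Hz.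
  case/orP: H1 => /eqP H1; nia.
+ have Hz' : n + 1 - k < k by rewrite ltnNge -Hz.
  case/orP: H1 => /eqP H1; nia.
Qed.

Lemma Inv_step n k z acc : 1 <= k <= n -> z = (k <= n + 1 - k) ->
  Inv n k z acc -> sumn acc != n ->
  Inv n k z (rcons acc (next_d n k z acc)) /\ 0 < next_d n k z acc.
Proof.
move=> Hk Hz [Hpos Hsum HC HS HQ] Hne.
have Hlt : sumn acc < n by rewrite ltn_neqAle Hne Hsum.
move: (HS Hlt) => {}HS.
set x := next_d n k z acc.
have Hx := next_dE n k z acc; rewrite /= -/x in Hx.
set l := (size acc).+1 in Hx HS.
set W := wt n k z l in Hx HS.
set W' := wt n k z l.+1 in Hx HS.
set S := sp acc l in Hx HS. set O := osp acc l in Hx HS.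
set T := maxm W ((O + 1) * W') in Hx.
have HW : 0 < W by apply: wt_pos.
have HW' : 0 < W' by apply: wt_pos.
have HST : S + 1 <= T by apply: maxm_ge.
have HT : T * W <= (O + 1) * W' by apply: maxm_le.
have Hx1 : 0 < x by rewrite Hx; lia.
set acc' := rcons acc x.
have Hsz : size acc' = l by rewrite size_rcons.
have Hdd : forall i, i <= size acc -> dd acc' i = dd acc i by move=> i Hi; apply: dd_rcons.
have Hspe : forall i, i <= l -> sp acc' i = sp acc i.
  by move=> i Hi; apply: eq_sp => j Hj; apply: Hdd; rewrite -ltnS (leq_trans Hj).
have Hospe : forall i, i <= l -> osp acc' i = osp acc i.
  by move=> i Hi; apply: eq_osp => j Hj; apply: Hdd; rewrite -ltnS (leq_trans Hj).
have Hddl : dd acc' l = x by apply: dd_rcons_last.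
split=> //; split.
- by rewrite all_rcons Hx1.
- rewrite sumn_rcons' Hx; lia.
- move=> l'; rewrite Hsz => /andP [Hl0 Hl'].
  case: (ltngtP l' l) Hl' => // [Hll _ | Hll _].
  + rewrite Hspe ?(ltnW Hll) // Hospe ?(ltnW Hll) // Hdd //.
    by apply: HC; rewrite Hl0 -ltnS.
  + rewrite Hll Hspe // Hospe // Hddl -/W -/W' -/S -/O.
    have HSx : S + x <= T by rewrite Hx; lia.
    have := leq_mul (leqnn W) HSx; nia.
- rewrite sumn_rcons' Hsz => Hlt'.
  have HxT : x = T - S by move: Hlt'; rewrite Hx; lia.
  rewrite spS Hospe // -/O -spS spSS Hspe // Hddl -/S wtSS -/W -/W'.
  have -> : S + x = T by lia.
  rewrite leqNgt; apply/negP => H.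
  have := maxm_ge _ _ (T + 1) HW (ltnW H); rewrite -/T; lia.
- move=> H1 _; rewrite Hsz.
  case: (posnP (size acc)) => Hs0; last first.
    by case: (HQ H1 Hs0) => E _; rewrite E eqxx in Hne.
  move: Hs0 => /size0nil Hnil.
  have HS0 : S = 0 by rewrite /S /sp Hnil osum_nil esum_nil; case: ifP.
  have HO0 : O = 0 by rewrite /O /osp Hnil osum_nil esum_nil; case: ifP.
  have Hl1 : l = 1 by rewrite /l Hnil.
  split; last exact: Hl1.
  rewrite /acc' sumn_rcons' Hx HS0 Hnil /= subn0.
  suff : n <= T by lia.
  rewrite /T HO0 /W /W' Hl1.
  apply: maxm_ge; first by apply: wt_pos.
  exact: first_big.
Qed.

Lemma Inv_nil n k z : 1 <= k <= n -> z = (k <= n + 1 - k) -> Inv n k z [::].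
Proof.
move=> Hk Hz; split=> //.
- by move=> l /andP [] /= H1 H2; move: (leq_trans H1 H2).
- move=> _; rewrite /sp /osp /= osum_nil esum_nil /wt Hz /=; case: (leqP k (n + 1 - k)) => H /=; lia.
Qed.

Lemma Inv_build n k z : forall fuel acc, 1 <= k <= n -> z = (k <= n + 1 - k) ->
  Inv n k z acc -> n <= sumn acc + fuel ->
  Inv n k z (build n k z fuel acc) /\ sumn (build n k z fuel acc) = n.
Proof.
elim=> [|f IH] acc Hk Hz HI Hn /=.
- by split=> //; case: HI => _ H _ _ _; lia.
- case: eqP => [E | /eqP Hne]; first by split.
  have [HI' Hx] := Inv_step _ _ _ _ Hk Hz HI Hne.
  apply: IH => //; rewrite sumn_rcons'; lia.
Qed.


Lemma psum_take ds t : psum ds t = sumn (take t ds).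
Proof.
elim: t => [|t IH]; first by rewrite take0.
rewrite psumS IH /=.
case: (ltnP t (size ds)) => Ht.
- by rewrite (take_nth 0 Ht) sumn_rcons'.
- by rewrite nth_default // !take_oversize ?addn0 // (leq_trans Ht).
Qed.

Lemma psum_size ds : psum ds (size ds) = sumn ds.
Proof. by rewrite psum_take take_size. Qed.

Lemma psum_pred ds t : 0 < t -> psum ds t = psum ds t.-1 + dd ds t.
Proof. by case: t => // t _; rewrite psumS. Qed.

Lemma tidxP ds j : 0 < j <= psum ds (size ds) ->
  0 < tidx ds j <= size ds /\ psum ds (tidx ds j).-1 < j <= psum ds (tidx ds j).
Proof.
move=> /andP [Hj0 Hj].
have Hs : 0 < size ds.
  by case: (size ds) Hj => //; rewrite psum0 => H; move: (leq_trans Hj0 H).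
set P := fun t => j <= psum ds t.
have Hhas : has P (iota 1 (size ds)).
  apply/hasP; exists (size ds); last by [].
  by rewrite mem_iota Hs /= add1n ltnSn.
move: (Hhas); rewrite has_find size_iota => Hi.
have Hn := nth_find 0 Hhas; rewrite nth_iota // in Hn.
rewrite /tidx -/P; split; first by rewrite /= Hi.
have Hn' : j <= psum ds (find P (iota 1 (size ds))).+1 by move: Hn; rewrite /P add1n.
rewrite Hn' andbT.
case E: (find P (iota 1 (size ds))) => [|i] //=.
have := before_find 0 (_ : i < find P (iota 1 (size ds))); rewrite E => /(_ (ltnSn i)).
rewrite nth_iota; last by rewrite E in Hi; apply: ltnW.
by rewrite /P add1n => /negbT; rewrite -ltnNge.
Qed.

Lemma tidx_uniq ds j t : 0 < t -> psum ds t.-1 < j <= psum ds t ->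
  0 < j <= psum ds (size ds) -> tidx ds j = t.
Proof.
move=> Ht /andP [H1 H2] Hj.
have [/andP [Ht0 _] /andP [H3 H4]] := tidxP _ _ Hj.
case: (ltngtP (tidx ds j) t) => // Hlt.
- have Hm : tidx ds j <= t.-1 by lia.
  have := psum_mono ds _ _ Hm; lia.
- have Hm : t <= (tidx ds j).-1 by lia.
  have := psum_mono ds _ _ Hm; lia.
Qed.

Lemma vvE z ds j : vv j (z, ds) =
  if z == odd (tidx ds j) then (sp ds (tidx ds j) + (j - psum ds (tidx ds j).-1), 0)
  else (0, sp ds (tidx ds j) + (j - psum ds (tidx ds j).-1)).
Proof. by rewrite /vv /sp /=; case: z; case: (odd _). Qed.


Definition Gj n k z ds j :=
  wt n k z (tidx ds j) * (sp ds (tidx ds j) + (j - psum ds (tidx ds j).-1)).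

Lemma dd_pos ds t : all (fun d => 0 < d) ds -> 0 < t <= size ds -> 0 < dd ds t.
Proof.
move=> /allP Ha; case: t => //= t Ht.
by apply: Ha; apply: mem_nth.
Qed.

Lemma step_G n k z ds i : 1 <= k <= n -> Inv n k z ds -> sumn ds = n -> 0 < i -> i < n ->
  let t := tidx ds i in
  (tidx ds i.+1 = t /\ Gj n k z ds i.+1 = Gj n k z ds i + wt n k z t) \/
  [/\ tidx ds i.+1 = t.+1, Gj n k z ds i <= Gj n k z ds i.+1, t < size ds,
      Gj n k z ds i = wt n k z t * (sp ds t + dd ds t) &
      Gj n k z ds i.+1 = wt n k z t.+1 * (sp ds t.+1 + 1)].
Proof.
move=> Hk [Hpos Hsum HC HS HQ] Hn Hi0 Hin t.
have Hps : psum ds (size ds) = n by rewrite psum_size.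
have Hi : 0 < i <= psum ds (size ds) by rewrite Hps Hi0 ltnW.
have Hi1 : 0 < i.+1 <= psum ds (size ds) by rewrite Hps.
have [/andP [Ht0 Hts] /andP [H1 H2]] := tidxP _ _ Hi.
rewrite -/t in Ht0 Hts H1 H2.
have Hpt := psum_pred ds t Ht0.
case: (ltnP i (psum ds t)) => H3.
- have E : tidx ds i.+1 = t by apply: tidx_uniq => //; rewrite H3 andbT; lia.
  left; split=> //; rewrite /Gj E -/t.
  have -> : i.+1 - psum ds t.-1 = (i - psum ds t.-1) + 1 by lia.
  by rewrite addnA mulnDr muln1.
- have Eit : i = psum ds t by lia.
  have Hts' : t < size ds.
    rewrite ltn_neqAle Hts andbT; apply/eqP => E.
    by move: Eit; rewrite E Hps => E'; rewrite E' ltnn in Hin.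
  have Hd := dd_pos ds t.+1 Hpos.
  have {}Hd := Hd Hts'.
  have E : tidx ds i.+1 = t.+1.
    apply: tidx_uniq => //=; rewrite psumS; lia.
  have G1 : Gj n k z ds i = wt n k z t * (sp ds t + dd ds t).
    by rewrite /Gj -/t; congr (_ * (_ + _)); lia.
  have G2 : Gj n k z ds i.+1 = wt n k z t.+1 * (sp ds t.+1 + 1).
    by rewrite /Gj E /=; congr (_ * (_ + _)); lia.
  right; split=> //.
  rewrite G1 G2 spS; apply: HC; by rewrite Ht0 Hts.
Qed.

Lemma wt_ge2 n k z ds t t' : 1 <= k <= n -> Inv n k z ds -> t < size ds -> 0 < t ->
  2 <= wt n k z t'.
Proof.
move=> Hk [_ _ _ _ HQ] Hts Ht.
have Hs : 0 < size ds by lia.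
case E: ((k == 1) || (n + 1 - k == 1)).
- by case: (HQ E Hs) => _ Hs1; lia.
- move/negbT: E; rewrite negb_or => /andP [/eqP H1 /eqP H2].
  rewrite /wt; case: ifP => _; lia.
Qed.

Lemma P2 n k z ds i : 1 <= k <= n -> Inv n k z ds -> sumn ds = n -> 0 < i -> i.+2 <= n ->
  Gj n k z ds i + 2 <= Gj n k z ds i.+2.
Proof.
move=> Hk HI Hn Hi Hin.
have HA := step_G _ _ _ _ i Hk HI Hn Hi (ltnW Hin).
have HB := step_G _ _ _ _ i.+1 Hk HI Hn (ltn0Sn _) Hin.
have Hw := fun t => wt_pos n k z t Hk.
case: HA => [[E1 G1] | [E1 G1 T1 G1a G1b]].
- case: HB => [[E2 G2] | [E2 G2 T2 G2a G2b]].
  + have := Hw (tidx ds i); have := Hw (tidx ds i.+1); lia.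
  + have := wt_ge2 _ _ _ _ _ (tidx ds i) Hk HI T2 (ltn0Sn _).
    case: (tidxP ds i.+1) => [|/andP [H0 _] _]; first by rewrite psum_size; lia.
    have := wt_ge2 _ _ _ _ _ (tidx ds i) Hk HI T2 H0; lia.
- case: (tidxP ds i) => [|/andP [H0 _] _]; first by rewrite psum_size; lia.
  have W2 := wt_ge2 _ _ _ _ _ (tidx ds i.+1) Hk HI T1 H0.
  case: HB => [[E2 G2] | [E2 G2 T2 G2a G2b]].
  + lia.
  + have W3 := wt_ge2 _ _ _ _ _ (tidx ds i) Hk HI T1 H0.
    move: G2b; rewrite E1 spSS wtSS => G2b.
    rewrite G2b G1a; nia.
Qed.

Lemma P1 n k z ds i : 1 <= k <= n -> Inv n k z ds -> sumn ds = n -> 0 < i -> i.+1 <= n ->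
  Gj n k z ds i <= Gj n k z ds i.+1.
Proof.
move=> Hk HI Hn Hi Hin.
case: (step_G _ _ _ _ i Hk HI Hn Hi Hin) => [[_ ->] | [_ ? _ _ _]] //.
by rewrite leq_addr.
Qed.

Lemma key n k z ds : 1 <= k <= n -> Inv n k z ds -> sumn ds = n ->
  forall m j, 0 < j -> j + m <= n -> Gj n k z ds j + m <= Gj n k z ds (j + m) + 1.
Proof.
move=> Hk HI Hn.
suff H : forall m, (forall j, 0 < j -> j + m <= n -> Gj n k z ds j + m <= Gj n k z ds (j + m) + 1) /\
                   (forall j, 0 < j -> j + m.+1 <= n -> Gj n k z ds j + m.+1 <= Gj n k z ds (j + m.+1) + 1).
  by move=> m; case: (H m).
elim=> [|m [IH1 IH2]].
- split=> j Hj Hjn; first by rewrite !addn0 leq_addr.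
  have Hj1 : j.+1 <= n by lia.
  have := P1 _ _ _ _ j Hk HI Hn Hj Hj1; rewrite (_ : j + 1 = j.+1) ?addn1 //; lia.
- split=> // j Hj Hjn.
  have Hj2 : j.+2 <= n by lia.
  have Hj3 : j.+2 + m <= n by lia.
  have := P2 _ _ _ _ j Hk HI Hn Hj Hj2.
  have := IH1 j.+2 (ltn0Sn _) Hj3.
  have -> : j.+2 + m = j + m.+2 by lia.
  lia.
Qed.


Lemma Gj_pos n k z ds j : 1 <= k <= n -> sumn ds = n -> 0 < j <= n -> 0 < Gj n k z ds j.
Proof.
move=> Hk Hn Hj.
have Hj' : 0 < j <= psum ds (size ds) by rewrite psum_size Hn.
have [_ /andP [H1 _]] := tidxP _ _ Hj'.
have := wt_pos n k z (tidx ds j) Hk.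
rewrite /Gj; move: (wt _ _ _ _) (sp _ _) => W S HW.
rewrite muln_gt0 HW andTb; lia.
Qed.

Lemma GvE n k z ds j : 1 <= k <= n ->
  k * (vv j (z, ds)).1 + (n + 1 - k) * (vv j (z, ds)).2 = Gj n k z ds j.
Proof.
move=> Hk; rewrite vvE /Gj /wt; case: ifP => _ /=; by rewrite ?muln0 ?addn0 ?add0n.
Qed.

Lemma fk_shift k n x y p : k <= n + 1 ->
  (fk k ((x + p)%N, (y + p)%N) + (n * y)%N%:Z = ((k * x + (n + 1 - k) * y + p)%N)%:Z)%R.
Proof. rewrite /fk /= => H; nia. Qed.

Lemma fk_diag k p : fk k (p, p) = (p%:Z)%R.
Proof. rewrite /fk /=; nia. Qed.

Theorem lemma3p12 (n k l q : nat) :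
  1 <= n -> 1 <= k <= n -> 1 <= l <= n ->
  n - l + 1 + rr n l (eta_k n k) <= q ->
  forall u : nat * nat,
    (inT0 n u \/ exists j, 1 <= j <= l /\ inTshift n j (eta_k n k) u) ->
    (fk k u <= fk k (vadd (vv l (eta_k n k)) (q, q)))%R.
Proof.
move=> Hn Hk Hl Hq u Hu.
rewrite /eta_k in Hq Hu *.
set z := (k <= n + 1 - k) in Hq Hu *.
set ds := build n k z n [::] in Hq Hu *.
have [HI Hs] : Inv n k z ds /\ sumn ds = n.
  by apply: Inv_build => //; apply: Inv_nil.
have Hkn : k <= n + 1 by lia.
set v := vv l (z, ds) in Hq *.
have Fl := fk_shift k n v.1 v.2 q Hkn.
have Gl := GvE n k z ds l Hk; rewrite -/v in Gl.
rewrite /rr -/v in Hq.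
have K1 := key _ _ _ _ Hk HI Hs (l - 1) 1 isT (_ : 1 + (l - 1) <= n).
have Hl1 : 1 + (l - 1) = l by lia.
rewrite Hl1 in K1; have {K1} K1 := K1 (ltac:(lia)).
have P1 := Gj_pos n k z ds 1 Hk Hs (ltac:(lia)).
rewrite /vadd /=.
move: Fl Gl Hq K1 P1.
case: Hu => [[p [Hp ->]] | [j [Hj [w [[p [Hp ->]] ->]]]]].
- rewrite fk_diag.
  move: (Gj n k z ds l) (Gj n k z ds 1) => GL G1.
  move: (fk k _) => Y.
  move: (k * v.1) ((n + 1 - k) * v.2) (n * v.2) => A C B.
  lia.
- rewrite /vadd /rr /= -!addnA.
  set vj := vv j (z, ds).
  have Fj := fk_shift k n vj.1 vj.2 (p + n * vj.2) Hkn.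
  have Gj := GvE n k z ds j Hk; rewrite -/vj in Gj.
  have Kj := key _ _ _ _ Hk HI Hs (l - j) j (ltac:(lia)) (ltac:(lia)).
  have Hlj : j + (l - j) = l by lia.
  rewrite Hlj in Kj.
  move: Fj Gj Kj.
  move: (Gj n k z ds j) (Gj n k z ds l) (Gj n k z ds 1) => GJ GL G1.
  move: (fk k ((vj.1 + _)%N, _)) => Y1.
  move: (fk k ((v.1 + _)%N, _)) => Y2.
  move: (k * v.1) ((n + 1 - k) * v.2) (n * v.2) => A C B.
  move: (k * vj.1) ((n + 1 - k) * vj.2) (n * vj.2) => A' C' B'.
  lia.
Qed.
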